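(* Let $\mathcal M=(S,L,\tau,\ell)$ be an LMC (possibly with infinitely many states). There is a policy $T$ such that for all $(s,t)\in S^2$ and all policies $T'$, \[ d(s,t)=\mathcal R^T_{\mathcal M}((s,t),S^2_1)\le\mathcal R^{T'}_{\mathcal M}((s,t),S^2_1). \] In particular $d=\min_{T}\mathcal R^T_{\mathcal M}(\cdot,S^2_1)$, the minimum being over all policies.
   Context: An LMC $\mathcal M=(S,L,\tau,\ell)$ has a nonempty countable state set $S$, finite label set $L$, finitely-branching transition function $\tau:S\to\mathrm{Distr}(S)$ and labelling $\ell$. The probabilistic bisimilarity distance $d$ is the least fixed point of $\Delta(e)(s,t)=1$ if $\ell(s)\ne\ell(t)$ and $\Delta(e)(s,t)=\min_{\omega\in\Omega(\tau(s),\tau(t))}\sum_{u,v}\omega(u,v)e(u,v)$ otherwise, where $\Omega(\mu,\nu)$ is the set of couplings (distributions on $S\times S$ with marginals $\mu,\nu$). Probabilistic bisimilarity $\sim$ is the largest equivalence $R$ on $S$ such that $(s,t)\in R$ implies $\ell(s)=\ell(t)$ and $\tau(s)(E)=\tau(t)(E)$ for every $R$-class $E$. Partition $S^2$ into $S^2_0=\{(s,t):s\sim t\}$, $S^2_1=\{(s,t):\ell(s)\ne\ell(t)\}$, $S^2_?=S^2\setminus(S^2_0\cup S^2_1)$. A policy is a map $T:S^2_?\to\mathrm{Distr}(S^2)$ with $T(s,t)\in\Omega(\tau(s),\tau(t))$. The Markov chain $\mathcal C^T_{\mathcal M}$ on $S^2$ has every pair in $S^2_0\cup S^2_1$ absorbing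 and from $(u,v)\in S^2_?$ moves to $(x,y)$ with probability $T(u,v)(x,y)$. $\mathcal R^T_{\mathcal M}((s,t),Z)$ is the probability that $\mathcal C^T_{\mathcal M}$ started in $(s,t)$ reaches $Z\subseteq S^2$. *)

(* Defs.v *)
From HB Require Import structures.
From mathcomp Require Import all_boot all_order all_algebra.
From mathcomp Require Import all_classical all_reals all_analysis.
Set Implicit Arguments. Unset Strict Implicit. Unset Printing Implicit Defensive.
Import Order.TTheory GRing.Theory Num.Theory.
Local Open Scope classical_set_scope.
Local Open Scope ring_scope.

Section LMC.
Context {R : realType}.

Definition is_distr (X : choiceType) (mu : X -> R) : Prop :=
  (forall x, 0 <= mu x) /\ (\esum_(x in [set: X]) (mu x)%:E = 1%E).

Definition mass (X : choiceType) (mu : X -> R) (E : set X) : \bar R :=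
  \esum_(x in E) (mu x)%:E.

Definition coupling (X : choiceType) (mu nu : X -> R) (omega : X * X -> R) : Prop :=
  is_distr omega /\
  (forall u, \esum_(v in [set: X]) (omega (u, v))%:E = (mu u)%:E) /\
  (forall v, \esum_(u in [set: X]) (omega (u, v))%:E = (nu v)%:E).

Context {S : countType} {L : finType}.
Variables (tau : S -> S -> R) (ell : S -> L).

Definition is_LMC : Prop :=
  forall s, is_distr (tau s) /\ finite_set [set u | tau s u != 0].

Definition prob_bisimulation (Rel : S -> S -> Prop) : Prop :=
  (forall s, Rel s s) /\ (forall s t, Rel s t -> Rel t s) /\
  (forall s t u, Rel s t -> Rel t u -> Rel s u) /\
  (forall s t, Rel s t ->
     ell s = ell t /\
     forall w : S, mass (tau s) [set u | Rel u w] = mass (tau t) [set u | Rel u w]).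

(* probabilistic bisimilarity: membership in the largest probabilistic
   bisimulation, i.e. in some probabilistic bisimulation *)
Definition bisimilar (s t : S) : Prop :=
  exists Rel, prob_bisimulation Rel /\ Rel s t.

Definition Delta (e : S * S -> R) (p : S * S) : R :=
  if ell p.1 != ell p.2 then 1
  else inf [set x : R | exists omega, coupling (tau p.1) (tau p.2) omega /\
              x = fine (\esum_(q in [set: S * S]) (omega q * e q)%:E)].

Definition unit_valued (e : S * S -> R) : Prop := forall p, 0 <= e p <= 1.

(* least fixed point of Delta on the complete lattice [0,1]^(S^2), given by
   the Knaster-Tarski formula: pointwise infimum of all pre-fixed points *)
Definition bisim_dist (p : S * S) : R :=
  inf [set e p | e in [set e : S * S -> R | unit_valued e /\
                         forall q, Delta e q <= e q]].

Definition S2_0 : set (S * S) := [set p | bisimilar p.1 p.2].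
Definition S2_1 : set (S * S) := [set p | ell p.1 <> ell p.2].
Definition S2_q : set (S * S) := ~` (S2_0 `|` S2_1).

(* a policy (only its values on S2_q matter) *)
Definition policy (T : S * S -> S * S -> R) : Prop :=
  forall p, S2_q p -> coupling (tau p.1) (tau p.2) (T p).

Definition chainP (T : S * S -> S * S -> R) (x y : S * S) : R :=
  if `[< S2_q x >] then T x y else (y == x)%:R.

Fixpoint reach_within (T : S * S -> S * S -> R) (Z : set (S * S)) (n : nat)
  (x : S * S) : R :=
  if `[< Z x >] then 1 else
  match n with
  | 0 => 0
  | n'.+1 => fine (\esum_(y in [set: S * S])
                     (chainP T x y * reach_within T Z n' y)%:E)
  end.

Definition reach_prob (T : S * S -> S * S -> R) (Z : set (S * S)) (x : S * S) : R :=
  sup [set reach_within T Z n x | n in [set: nat]].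

End LMC.

(* Main.v *)
Require Import Defs.
From HB Require Import structures.
From mathcomp Require Import all_boot all_order all_algebra.
From mathcomp Require Import all_classical all_reals all_analysis.
From mathcomp Require Import ring.
Import Order.TTheory GRing.Theory Num.Theory.
Import numFieldNormedType.Exports.
Local Open Scope classical_set_scope.
Local Open Scope ring_scope.

Lemma esumT_seq (R : realType) (T : choiceType) (h : T -> R) (l : seq T) :
  uniq l -> (forall x, 0 <= h x) -> (forall x, x \notin l -> h x = 0) ->
  \esum_(x in [set: T]) (h x)%:E = (\sum_(x <- l) h x)%:E.
Proof.
move=> ul h0 hl.
rewrite (esumID [set` l]); last by move=> x _; rewrite lee_fin.
rewrite [X in _ + X]esum1 ?adde0; last first.
  by move=> x [_ /= xl]; rewrite hl //; apply/negP.
rewrite setTI esum_fset; last 2 first.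
- exact: finite_seq.
- by move=> x _; rewrite lee_fin.
by rewrite fsumEFin ?finite_seq // -fsbig_seq.
Qed.

Lemma esum_seq (R : realType) (T : choiceType) (D : set T) (f : T -> R) (l : seq T) :
  uniq l -> (forall x, 0 <= f x) -> (forall x, x \notin l -> f x = 0) ->
  \esum_(x in D) (f x)%:E = (\sum_(x <- l | x \in D) f x)%:E.
Proof.
move=> ul f0 fl; rewrite esum_mkcond.
rewrite (eq_esum (b := fun x => (if x \in D then f x else 0)%:E)); last first.
  by move=> x _; case: ifP.
rewrite (@esumT_seq R _ _ _ ul).
- by rewrite [in RHS]big_mkcond.
- by move=> x; case: ifP.
- by move=> x xl; case: ifP => // _; rewrite fl.
Qed.

Lemma cvg_sumseq (R : realType) (I : Type) (r : seq I) (c : I -> R)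
  (u : I -> nat -> R) (l : I -> R) :
  (forall i, (u i : nat -> R) @ \oo --> (l i : R)) ->
  (fun n => \sum_(i <- r) c i * u i n) @ \oo --> (\sum_(i <- r) c i * l i : R).
Proof.
move=> h; elim: r => [|i r IH].
  rewrite big_nil; under eq_cvg do rewrite big_nil; exact: cvg_cst.
rewrite big_cons; under eq_cvg do rewrite big_cons.
apply: cvgD => //; exact: cvgMl_tmp.
Qed.

Section Main.
Variables (R : realType) (S : countType) (L : finType)
  (tau : S -> S -> R) (ell : S -> L).
Hypothesis HL : is_LMC tau.
Variable sp : S -> seq S.
Hypothesis sp_uniq : forall s, uniq (sp s).
Hypothesis sp_supp : forall s u, tau s u != 0 -> u \in sp s.

Lemma tau_ge0 s u : 0 <= tau s u.
Proof. by have [[h _] _] := HL s; apply: h. Qed.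

Lemma tau_out s u : u \notin sp s -> tau s u = 0.
Proof. by move=> h; apply/eqP; apply: contraNT h; apply: sp_supp. Qed.

Lemma tau_sum s : \sum_(u <- sp s) tau s u = 1.
Proof.
have [[_ h] _] := HL s.
move: h; rewrite (@esumT_seq R _ _ _ (sp_uniq s)).
- by case.
- exact: tau_ge0.
- exact: tau_out.
Qed.

Definition P (s t : S) : seq (S * S) := [seq (u, v) | u <- sp s, v <- sp t].

Lemma P_uniq s t : uniq (P s t).
Proof. by apply: allpairs_uniq => // -[a b] [c d] _ _ /= [-> ->]. Qed.

Lemma mem_P s t u v : ((u, v) \in P s t) = (u \in sp s) && (v \in sp t).
Proof.
apply/idP/idP.
  by case/allpairsP => -[a b] /= [ha hb [-> ->]]; rewrite ha hb.
by case/andP => ha hb; apply: (allpairs_f pair ha hb).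
Qed.

Lemma sum_P s t (F : S * S -> R) :
  \sum_(q <- P s t) F q = \sum_(u <- sp s) \sum_(v <- sp t) F (u, v).
Proof. exact: big_allpairs. Qed.

Lemma term_le_esum (T : choiceType) (f : T -> R) (x : T) :
  (forall y, 0 <= f y) -> ((f x)%:E <= \esum_(y in [set: T]) (f y)%:E)%E.
Proof.
move=> f0; apply: esum_ge; exists [set x].
  by split; [exact: finite_set1 | by []].
by rewrite fsbig_set1.
Qed.

Section Coupling.
Variables (s t : S) (w : S * S -> R).
Hypothesis cw : coupling (tau s) (tau t) w.

Lemma cw_ge0 q : 0 <= w q.
Proof. by case: cw => [[h _] _]; apply: h. Qed.

Lemma cw_out q : q \notin P s t -> w q = 0.
Proof.
case: q => u v; rewrite mem_P negb_and => h.
case: cw => _ [hr hc].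
apply/eqP; rewrite eq_le cw_ge0 andbT -lee_fin.
case/orP: h => h.
  have e1 := hr u; rewrite (tau_out _ _ h) in e1; rewrite -e1.
  by apply: (@term_le_esum _ (fun y => w (u, y)) v) => y; apply: cw_ge0.
have e1 := hc v; rewrite (tau_out _ _ h) in e1; rewrite -e1.
by apply: (@term_le_esum _ (fun y => w (y, v)) u) => y; apply: cw_ge0.
Qed.

Lemma cw_row u : \sum_(v <- sp t) w (u, v) = tau s u.
Proof.
case: cw => _ [hr _]; move: (hr u).
rewrite (@esumT_seq R _ _ _ (sp_uniq t)); first by case.
- by move=> y; apply: cw_ge0.
- by move=> y hy; apply: cw_out; rewrite mem_P (negbTE hy) andbF.
Qed.

Lemma cw_col v : \sum_(u <- sp s) w (u, v) = tau t v.
Proof.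
case: cw => _ [_ hc]; move: (hc v).
rewrite (@esumT_seq R _ _ _ (sp_uniq s)); first by case.
- by move=> y; apply: cw_ge0.
- by move=> y hy; apply: cw_out; rewrite mem_P (negbTE hy).
Qed.

Lemma cw_sum : \sum_(q <- P s t) w q = 1.
Proof.
by rewrite sum_P -(tau_sum s); apply: eq_bigr => u _; rewrite cw_row.
Qed.

Lemma cost_eq (e : S * S -> R) : (forall q, 0 <= e q) ->
  fine (\esum_(q in [set: S * S]) (w q * e q)%:E) = \sum_(q <- P s t) w q * e q.
Proof.
move=> e0; rewrite (@esumT_seq R _ _ _ (P_uniq s t)) //.
- by move=> q; rewrite mulr_ge0 // cw_ge0.
- by move=> q hq; rewrite cw_out // mul0r.
Qed.

End Coupling.
Arguments cw_ge0 {s t w}.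
Arguments cw_out {s t w}.
Arguments cw_row {s t w}.
Arguments cw_col {s t w}.
Arguments cw_sum {s t w}.
Arguments cost_eq {s t w}.

Lemma mk_coupling s t (w : S * S -> R) :
  (forall q, 0 <= w q) -> (forall q, q \notin P s t -> w q = 0) ->
  (forall u, \sum_(v <- sp t) w (u, v) = tau s u) ->
  (forall v, \sum_(u <- sp s) w (u, v) = tau t v) ->
  coupling (tau s) (tau t) w.
Proof.
move=> w0 wout hr hc.
have ht : \sum_(q <- P s t) w q = 1.
  by rewrite sum_P -(tau_sum s); apply: eq_bigr => u _; rewrite hr.
split; [split|split].
- exact: w0.
- by rewrite (@esumT_seq R _ _ _ (P_uniq s t)) // ht.
- move=> u; rewrite (@esumT_seq R _ _ _ (sp_uniq t)) ?hr //.
  by move=> v hv; rewrite wout // mem_P (negbTE hv) andbF.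
- move=> v; rewrite (@esumT_seq R _ _ _ (sp_uniq s)) ?hc //.
  by move=> u hu; rewrite wout // mem_P (negbTE hu).
Qed.


Definition cost s t (w e : S * S -> R) := \sum_(q <- P s t) w q * e q.

Definition prodc s t : S * S -> R := fun q => tau s q.1 * tau t q.2.

Lemma prodc_coupling s t : coupling (tau s) (tau t) (prodc s t).
Proof.
apply: mk_coupling.
- by move=> q; rewrite mulr_ge0 // tau_ge0.
- case=> u v; rewrite mem_P negb_and /prodc /= => /orP[h|h].
    by rewrite (tau_out _ _ h) mul0r.
  by rewrite (tau_out _ _ h) mulr0.
- by move=> u; rewrite /prodc /= -mulr_sumr tau_sum mulr1.
- by move=> v; rewrite /prodc /= -mulr_suml tau_sum mul1r.
Qed.

Lemma cost_ge0 s t w e : coupling (tau s) (tau t) w -> (forall q, 0 <= e q) ->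
  0 <= cost s t w e.
Proof.
move=> cw e0; apply: sumr_ge0 => q _; rewrite mulr_ge0 //; exact: cw_ge0 cw q.
Qed.

Lemma cost_le s t w e e' : coupling (tau s) (tau t) w ->
  (forall q, e q <= e' q) -> cost s t w e <= cost s t w e'.
Proof.
move=> cw h; apply: ler_sum => q _; rewrite ler_wpM2l //; exact: cw_ge0 cw q.
Qed.

Lemma cost_le1 s t w e : coupling (tau s) (tau t) w -> (forall q, e q <= 1) ->
  cost s t w e <= 1.
Proof.
move=> cw h; rewrite -(cw_sum cw); apply: ler_sum => q _.
by rewrite -{2}(mulr1 (w q)) ler_wpM2l //; exact: cw_ge0 cw q.
Qed.

Definition DSet (e : S * S -> R) (p : S * S) : set R :=
  [set x : R | exists omega, coupling (tau p.1) (tau p.2) omega /\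
              x = fine (\esum_(q in [set: S * S]) (omega q * e q)%:E)].

Lemma DSetE (e : S * S -> R) p x : (forall q, 0 <= e q) ->
  DSet e p x <-> exists2 w, coupling (tau p.1) (tau p.2) w & x = cost p.1 p.2 w e.
Proof.
move=> e0; split.
  by case=> w [cw ->]; exists w => //; rewrite (cost_eq cw).
by case=> w cw ->; exists w; split => //; rewrite (cost_eq cw).
Qed.

Lemma Delta_neq e p : ell p.1 <> ell p.2 -> Delta tau ell e p = 1.
Proof. by move=> h; rewrite /Delta; case: eqP. Qed.

Lemma Delta_eq e p : ell p.1 = ell p.2 -> Delta tau ell e p = inf (DSet e p).
Proof. by move=> h; rewrite /Delta h eqxx. Qed.

Lemma Delta_le (e : S * S -> R) p w : (forall q, 0 <= e q) -> ell p.1 = ell p.2 ->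
  coupling (tau p.1) (tau p.2) w -> Delta tau ell e p <= cost p.1 p.2 w e.
Proof.
move=> e0 hl cw; rewrite Delta_eq //; apply: ge_inf.
  by exists 0 => x /(DSetE _ _ _ e0) [w' cw' ->]; apply: cost_ge0.
by apply/(DSetE _ _ _ e0); exists w.
Qed.

Arguments Delta_le {e p w}.

Lemma Delta_ge (e : S * S -> R) p c : (forall q, 0 <= e q) -> ell p.1 = ell p.2 ->
  (forall w, coupling (tau p.1) (tau p.2) w -> c <= cost p.1 p.2 w e) ->
  c <= Delta tau ell e p.
Proof.
move=> e0 hl h; rewrite Delta_eq //; apply: lb_le_inf.
  by exists (cost p.1 p.2 (prodc p.1 p.2) e); apply/(DSetE _ _ _ e0);
     exists (prodc p.1 p.2) => //; apply: prodc_coupling.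
by move=> x /(DSetE _ _ _ e0) [w cw ->]; apply: h.
Qed.

Lemma Delta_unit e : unit_valued e -> unit_valued (Delta tau ell e).
Proof.
move=> ue p; have e0 : forall q, 0 <= e q by move=> q; case/andP: (ue q).
have e1 : forall q, e q <= 1 by move=> q; case/andP: (ue q).
case: (eqVneq (ell p.1) (ell p.2)) => [hl|/eqP hl]; last first.
  by rewrite Delta_neq // ler01 lexx.
apply/andP; split.
  by apply: Delta_ge => // w cw; apply: cost_ge0.
apply: (le_trans (Delta_le e0 hl (prodc_coupling p.1 p.2))).
by apply: cost_le1 => //; apply: prodc_coupling.
Qed.

Lemma Delta_mono (e e' : S * S -> R) : (forall q, 0 <= e q) -> (forall q, e q <= e' q) ->
  forall p, Delta tau ell e p <= Delta tau ell e' p.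
Proof.
move=> e0 h p.
case: (eqVneq (ell p.1) (ell p.2)) => [hl|/eqP hl]; last by rewrite !Delta_neq.
have e0' : forall q, 0 <= e' q by move=> q; apply: le_trans (e0 q) (h q).
apply: Delta_ge => // w cw.
apply: le_trans (Delta_le e0 hl cw) _; exact: cost_le.
Qed.

Arguments Delta_unit {e}.
Arguments Delta_mono {e e'}.
Arguments cost_ge0 {s t w e}.
Arguments cost_le {s t w e e'}.
Arguments cost_le1 {s t w e}.

Definition Pre := [set e : S * S -> R | unit_valued e /\
                         forall q, Delta tau ell e q <= e q].

Lemma one_Pre : Pre (fun _ => 1).
Proof.
split; first by move=> q; rewrite ler01 lexx.
move=> q; have h1 : unit_valued (fun _ : S * S => (1 : R)).
  by move=> q'; rewrite ler01 lexx.
by case/andP: (Delta_unit h1 q).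
Qed.

Notation d := (bisim_dist tau ell).

Lemma d_le {e} : Pre e -> forall p, d p <= e p.
Proof.
move=> Pe p; apply: ge_inf; last by exists e.
exists 0 => _ [e' [ue' _] <-]; by case/andP: (ue' p).
Qed.

Lemma d_ge0 p : 0 <= d p.
Proof.
apply: lb_le_inf; first by exists 1; exists (fun _ => 1) => //; exact: one_Pre.
by move=> _ [e' [ue' _] <-]; case/andP: (ue' p).
Qed.

Lemma d_unit : unit_valued d.
Proof. by move=> p; rewrite d_ge0 /= (d_le one_Pre p). Qed.

Lemma d_fix p : Delta tau ell d p = d p.
Proof.
have Dd_le : forall p, Delta tau ell d p <= d p.
  move=> p'; apply: lb_le_inf.
    by exists 1; exists (fun _ => 1) => //; exact: one_Pre.
  move=> _ [e Pe <-]; apply: le_trans (Delta_mono d_ge0 (d_le Pe) p') _.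
  by case: Pe => _ ->.
apply/eqP; rewrite eq_le Dd_le /=; apply: d_le; split.
  exact: Delta_unit d_unit.
apply: Delta_mono => //; move=> q; by case/andP: (Delta_unit d_unit q).
Qed.


Lemma q_eq x : S2_q tau ell x -> ell x.1 = ell x.2.
Proof. by move=> h; apply: contrapT => hn; apply: h; right. Qed.

Lemma q_coupling T x : policy tau ell T -> S2_q tau ell x ->
  coupling (tau x.1) (tau x.2) (T x).
Proof. by move=> hT; apply: hT. Qed.

Lemma notq_S0 x : ~ S2_q tau ell x -> ~ S2_1 ell x -> S2_0 tau ell x.
Proof.
move=> hq h1; apply: contrapT => h0; apply: hq; move=> [//|//].
Qed.

Section Policy.
Variable T : S * S -> S * S -> R.
Hypothesis HT : policy tau ell T.

Notation rw := (reach_within tau ell T (S2_1 ell)).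
Notation rp := (reach_prob tau ell T (S2_1 ell)).

Lemma rw_S1 n x : S2_1 ell x -> rw n x = 1.
Proof. by move=> h; case: n => [|n] /=; rewrite asboolT. Qed.

Lemma chain_ge0 x y : 0 <= chainP tau ell T x y.
Proof.
rewrite /chainP; case: asboolP => h; last by case: (y == x).
exact: cw_ge0 (HT _ h) y.
Qed.

Lemma rw_ge0 n x : 0 <= rw n x.
Proof.
elim: n x => [|n IH] x /=; case: asboolP => //= _.
apply: fine_ge0; apply: esum_ge0 => y _; rewrite lee_fin.
by rewrite mulr_ge0 // chain_ge0.
Qed.

Lemma rw_step n x : ~ S2_1 ell x ->
  rw n.+1 x = if `[< S2_q tau ell x >] then cost x.1 x.2 (T x) (rw n) else rw n x.
Proof.
move=> h1 /=; rewrite asboolF //; case: asboolP => hq.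
  rewrite /chainP asboolT //.
  by rewrite (cost_eq (HT _ hq) _ (rw_ge0 n)).
rewrite /chainP asboolF //.
rewrite (@esumT_seq R _ _ [:: x]) //=.
- by rewrite big_cons big_nil eqxx mul1r addr0.
- by move=> y; rewrite mulr_ge0 ?rw_ge0 //; case: (y == x).
- by move=> y; rewrite inE => /negbTE ->; rewrite mul0r.
Qed.

Lemma rw_le1 n x : rw n x <= 1.
Proof.
elim: n x => [|n IH] x.
  by rewrite /=; case: asboolP => _; rewrite ?ler01.
case: (asboolP (S2_1 ell x)) => h1; first by rewrite rw_S1.
rewrite rw_step //; case: asboolP => hq; last exact: IH.
exact: cost_le1 (HT _ hq) IH.
Qed.

Lemma rw_mono n x : rw n x <= rw n.+1 x.
Proof.
elim: n x => [|n IH] x.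
  case: (asboolP (S2_1 ell x)) => h1; first by rewrite !rw_S1.
  by have := rw_ge0 1 x; rewrite /= !asboolF.
case: (asboolP (S2_1 ell x)) => h1; first by rewrite !rw_S1.
rewrite (rw_step n.+1) // rw_step //; case: asboolP => hq; last exact: lexx.
exact: cost_le (HT _ hq) IH.
Qed.

Lemma rw_S0 n x : ~ S2_q tau ell x -> ~ S2_1 ell x -> rw n x = 0.
Proof.
move=> hq h1; elim: n => [|n IH]; first by rewrite /= asboolF.
by rewrite rw_step // asboolF.
Qed.

Lemma rw_cvg x : (fun n => rw n x) @ \oo --> rp x.
Proof.
apply: nondecreasing_cvgn.
  by apply/nondecreasing_seqP => n; apply: rw_mono.
by exists 1 => _ [n _ <-]; apply: rw_le1.
Qed.

Lemma rp_ge0 x : 0 <= rp x.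
Proof.
apply: (le_trans (rw_ge0 0 x)); apply: ub_le_sup; last by exists 0%N.
by exists 1 => _ [n _ <-]; apply: rw_le1.
Qed.

Lemma rp_le1 x : rp x <= 1.
Proof.
by apply: ge_sup; [exists (rw 0 x); exists 0%N | move=> _ [n _ <-]; apply: rw_le1].
Qed.

Lemma rp_S1 x : S2_1 ell x -> rp x = 1.
Proof.
move=> h; apply/eqP; rewrite eq_le rp_le1 /=.
rewrite -(rw_S1 0 x h); apply: ub_le_sup; last by exists 0%N.
by exists 1 => _ [n _ <-]; apply: rw_le1.
Qed.

Lemma rp_S0 x : ~ S2_q tau ell x -> ~ S2_1 ell x -> rp x = 0.
Proof.
move=> hq h1; apply/eqP; rewrite eq_le rp_ge0 andbT.
apply: ge_sup; first by exists (rw 0 x); exists 0%N.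
by move=> _ [n _ <-]; rewrite rw_S0.
Qed.

Lemma rp_q x : S2_q tau ell x -> rp x = cost x.1 x.2 (T x) rp.
Proof.
move=> hq; have h1 : ~ S2_1 ell x by move=> h; apply: hq; right.
have c1 : (fun n => rw n.+1 x) @ \oo --> rp x.
  by rewrite (cvg_shiftS (fun n => rw n x)); apply: rw_cvg.
have c2 : (fun n => rw n.+1 x) @ \oo --> cost x.1 x.2 (T x) rp.
  under eq_cvg do rewrite rw_step // asboolT //.
  apply: cvg_sumseq => q; exact: rw_cvg.
exact: cvg_unique c1 c2.
Qed.

End Policy.
Arguments rw_S1 {T}.
Arguments chain_ge0 {T}.
Arguments rw_ge0 {T}.
Arguments rw_step {T}.
Arguments rw_le1 {T}.
Arguments rw_mono {T}.
Arguments rw_S0 {T}.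
Arguments rw_cvg {T}.
Arguments rp_ge0 {T}.
Arguments rp_le1 {T}.
Arguments rp_S1 {T}.
Arguments rp_S0 {T}.
Arguments rp_q {T}.


Lemma le_sum_seq (T : eqType) (l : seq T) (Pr : pred T) (f : T -> R) x :
  uniq l -> x \in l -> Pr x -> (forall y, 0 <= f y) ->
  f x <= \sum_(y <- l | Pr y) f y.
Proof.
move=> ul xl px f0; rewrite big_mkcond (bigD1_seq x) //= px lerDl.
by apply: sumr_ge0 => y _; case: ifP.
Qed.

Lemma bisim_coupling s t : bisimilar tau ell s t ->
  exists w, coupling (tau s) (tau t) w /\
    forall u v, w (u, v) != 0 -> bisimilar tau ell u v.
Proof.
case=> Rl [[Rr [Rs [Rt Rb]]] Rst].
pose mS u := \sum_(y <- sp s | `[< Rl y u >]) tau s y.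
pose mT u := \sum_(y <- sp t | `[< Rl y u >]) tau t y.
have massE : forall s' u, mass (tau s') [set y | Rl y u] =
    (\sum_(y <- sp s' | `[< Rl y u >]) tau s' y)%:E.
  move=> s' u; rewrite /mass (@esum_seq R _ _ _ (sp s')) //.
  - exact: tau_ge0.
  - exact: tau_out.
have mST : forall u, mS u = mT u.
  move=> u; have [_ h] := Rb _ _ Rst; have := h u.
  by rewrite !massE => -[].
have mS_ge0 : forall u, 0 <= mS u.
  by move=> u; apply: sumr_ge0 => y _; apply: tau_ge0.
have mS_cl : forall u v, Rl u v -> mS u = mS v.
  move=> u v huv; apply: eq_bigl => y; apply/asboolP/asboolP => h.
    exact: Rt h huv.
  exact: Rt h (Rs _ _ huv).
have tau_le_mS : forall u, tau s u <= mS u.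
  move=> u; case: (boolP (u \in sp s)) => hu; last first.
    by rewrite (tau_out _ _ hu) mS_ge0.
  apply: le_sum_seq => //; first by apply/asboolP.
  exact: tau_ge0.
have tau_le_mT : forall v, tau t v <= mT v.
  move=> v; case: (boolP (v \in sp t)) => hv; last first.
    by rewrite (tau_out _ _ hv) -mST mS_ge0.
  apply: le_sum_seq => //; first by apply/asboolP.
  exact: tau_ge0.
pose w (q : S * S) := if `[< Rl q.1 q.2 >] then tau s q.1 * tau t q.2 / mS q.1 else 0.
exists w; split; last first.
  move=> u v; rewrite /w /=; case: asboolP => h; last by rewrite eqxx.
  move=> _.
  by exists Rl; split => //; split=> //; split.
apply: mk_coupling.
- move=> q; rewrite /w; case: asboolP => // _.
  by rewrite divr_ge0 // mulr_ge0 // tau_ge0.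
- case=> u v; rewrite mem_P negb_and /w /= => /orP[h|h]; case: asboolP => // _.
    by rewrite (tau_out _ _ h) !mul0r.
  by rewrite (tau_out _ _ h) mulr0 mul0r.
- move=> u; rewrite /w /=.
  have -> : \sum_(v <- sp t) (if `[< Rl u v >] then tau s u * tau t v / mS u else 0)
     = tau s u / mS u * mT u.
    rewrite /mT mulr_sumr [RHS]big_mkcond; apply: eq_bigr => v _.
    case: asboolP => h1; case: asboolP => h2 //.
    - by rewrite mulrAC.
    - by case: h2; apply: Rs.
    - by case: h1; apply: Rs.
  rewrite -mST; case: (eqVneq (mS u) 0) => h0.
    have := tau_le_mS u; rewrite h0 mulr0 => hle.
    by apply/eqP; rewrite eq_le tau_ge0 hle.
  by rewrite divfK.
- move=> v; rewrite /w /=.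
  have -> : \sum_(u <- sp s) (if `[< Rl u v >] then tau s u * tau t v / mS u else 0)
     = tau t v / mS v * mS v.
    rewrite /mS mulr_sumr [RHS]big_mkcond; apply: eq_bigr => u _.
    case: asboolP => h1 //.
    by rewrite -/(mS u) -/(mS v) (mS_cl _ _ h1); ring.
  case: (eqVneq (mS v) 0) => h0.
    have := tau_le_mT v; rewrite -mST h0 mulr0 => hle.
    by apply/eqP; rewrite eq_le tau_ge0 hle.
  by rewrite divfK.
Qed.


Lemma cvg_sumseqF (T : Type) (F : set_system T) (FF : Filter F) (I : Type)
  (r : seq I) (c : I -> R) (u : I -> T -> R) (l : I -> R) :
  (forall i, u i @ F --> (l i : R)) ->
  (fun x => \sum_(i <- r) c i * u i x) @ F --> (\sum_(i <- r) c i * l i : R).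
Proof.
move=> h; elim: r => [|i r IH].
  rewrite big_nil; under eq_cvg do rewrite big_nil; exact: cvg_cst.
rewrite big_cons; under eq_cvg do rewrite big_cons.
apply: cvgD => //; exact: cvgMl_tmp.
Qed.

Definition PT := prod_topology (fun _ : S * S => R).

Lemma sum_cont (I : Type) (l : seq I) (c : I -> R) (f : I -> S * S) :
  continuous (fun w : PT => \sum_(i <- l) c i * w (f i)).
Proof.
move=> w.
have h := (@cvg_sumseqF PT (nbhs w) _ _ l c (fun i (w0 : PT) => w0 (f i)) (fun i => w (f i))
   (fun i => @proj_continuous _ (fun _ : S * S => R) (f i) w)).
exact: h.
Qed.


Lemma closed_sumeq (I : Type) (l : seq I) (c : I -> R) (f : I -> S * S) (y : R) :
  closed [set w : PT | \sum_(i <- l) c i * w (f i) = y].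
Proof.
have -> : [set w : PT | \sum_(i <- l) c i * w (f i) = y] =
   (fun w : PT => \sum_(i <- l) c i * w (f i)) @^-1` [set x : R | x = y] by [].
apply: (@preimage_closed PT R); last exact: closed_eq.
move=> w _; exact: (@sum_cont I l c f w).
Qed.
Lemma tau_le1 s u : tau s u <= 1.
Proof.
case: (boolP (u \in sp s)) => hu; last by rewrite (tau_out _ _ hu) ler01.
rewrite -(tau_sum s) -[X in X <= _]/((fun y => tau s y) u).
have := @le_sum_seq _ (sp s) xpredT (tau s) u (sp_uniq s) hu isT (tau_ge0 s).
by [].
Qed.

Lemma opt_coupling s t (e : S * S -> R) :
  exists w, coupling (tau s) (tau t) w /\
    forall w', coupling (tau s) (tau t) w' -> cost s t w e <= cost s t w' e.
Proof.
pose A (q : S * S) : set R := if q \in P s t then `[0, 1]%classic else [set 0].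
pose box := [set w : PT | forall q, A q (w q)].
have cbox : compact box.
  apply: (@tychonoff _ (fun _ : S * S => R)) => q; rewrite /A.
  case: ifP => _; [exact: segment_compact | exact: compact_set1].
pose E1 := \bigcap_(u in [set: S])
   [set w : PT | \sum_(v <- sp t) (fun=> 1) v * w ((fun v => (u, v)) v) = tau s u].
pose E2 := \bigcap_(v in [set: S])
   [set w : PT | \sum_(u <- sp s) (fun=> 1) u * w ((fun u => (u, v)) u) = tau t v].
have cE1 : closed E1.
  by apply: closed_bigI => u _; apply: closed_sumeq.
have cE2 : closed E2.
  by apply: closed_bigI => v _; apply: closed_sumeq.
pose C := box `&` (E1 `&` E2).
have cC : compact C by apply: compact_closedI => //; apply: closedI.
have coupC : forall w : PT, coupling (tau s) (tau t) w -> C w.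
  move=> w cw; split; [|split].
  - move=> q; rewrite /A; case: ifP => hq.
      rewrite /= in_itv /= (cw_ge0 cw q) /= -(cw_sum cw).
      have := @le_sum_seq _ (P s t) xpredT w q (P_uniq s t) hq isT (cw_ge0 cw).
      by [].
    by rewrite /= (cw_out cw) // hq.
  - move=> u _; rewrite /= -(cw_row cw u).
    by apply: eq_bigr => v _; rewrite mul1r.
  - move=> v _; rewrite /= -(cw_col cw v).
    by apply: eq_bigr => u _; rewrite mul1r.
have Cc : forall w : PT, C w -> coupling (tau s) (tau t) w.
  move=> w [hb [h1 h2]]; apply: mk_coupling.
  - move=> q; have := hb q; rewrite /A; case: ifP => _.
      by rewrite /= in_itv /= => /andP[].
    by move=> ->.
  - by move=> q hq; have := hb q; rewrite /A (negbTE hq).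
  - move=> u; have := h1 u I; rewrite /= => <-.
    by apply: eq_bigr => v _; rewrite mul1r.
  - move=> v; have := h2 v I; rewrite /= => <-.
    by apply: eq_bigr => u _; rewrite mul1r.
have C0 : C !=set0 by exists (prodc s t : PT); apply: coupC; exact: prodc_coupling.
have fc := @sum_cont _ (P s t) e id.
have [c cin cmin] := @compact_EVT_min PT R _ C C0 cC (continuous_subspaceT fc).
have cc : coupling (tau s) (tau t) c by apply: Cc; rewrite -inE.
exists c; split => // w' cw'.
have := cmin w'; rewrite inE => /(_ (coupC _ cw')).
by rewrite /cost; under eq_bigr do rewrite mulrC; under [X in _ <= X]eq_bigr do rewrite mulrC.
Qed.

Lemma bisim_lab u v : bisimilar tau ell u v -> ell u = ell v.
Proof. by case=> Rl [[_ [_ [_ Rb]]] h]; case: (Rb _ _ h). Qed.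

Lemma d_le_rp T' : policy tau ell T' -> forall x,
  bisim_dist tau ell x <= reach_prob tau ell T' (S2_1 ell) x.
Proof.
move=> hT'; apply: d_le; split.
  by move=> q; rewrite (rp_ge0 hT') (rp_le1 hT').
move=> q; case: (asboolP (S2_1 ell q)) => h1.
  by rewrite Delta_neq // (rp_S1 hT').
have rp0 := rp_ge0 hT'.
case: (asboolP (S2_q tau ell q)) => hq.
  rewrite [X in _ <= X](rp_q hT' _ hq).
  exact: Delta_le rp0 (q_eq _ hq) (hT' _ hq).
have hb : bisimilar tau ell q.1 q.2 by apply: notq_S0.
have [w [cw wb]] := bisim_coupling _ _ hb.
have hl : ell q.1 = ell q.2 by apply: bisim_lab.
apply: le_trans (Delta_le rp0 hl cw) _.
rewrite /cost big1_seq ?rp0 //; case=> u v _.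
case: (eqVneq (w (u, v)) 0) => [->|hw]; first by rewrite mul0r.
have hb' := wb _ _ hw.
rewrite (rp_S0 hT') ?mulr0 //.
  by move=> hq'; apply: hq'; left.
by move=> h'; apply: h'; apply: bisim_lab.
Qed.

Lemma main_sec : exists T : S * S -> S * S -> R,
    policy tau ell T /\
    forall (s t : S) (T' : S * S -> S * S -> R),
      policy tau ell T' ->
      bisim_dist tau ell (s, t) = reach_prob tau ell T (S2_1 ell) (s, t) /\
      reach_prob tau ell T (S2_1 ell) (s, t) <= reach_prob tau ell T' (S2_1 ell) (s, t).
Proof.
have hopt : forall p : S * S, exists w, ell p.1 = ell p.2 ->
    coupling (tau p.1) (tau p.2) w /\ cost p.1 p.2 w (bisim_dist tau ell) <= bisim_dist tau ell p.
  move=> p; have [w [cw hw]] := opt_coupling p.1 p.2 (bisim_dist tau ell).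
  exists w => hl; split => //.
  rewrite -[X in _ <= X]d_fix; apply: Delta_ge => //; exact: d_ge0.
have [T hT] := choice hopt.
have pT : policy tau ell T by move=> p hq; exact: (hT p (q_eq _ hq)).1.
have rwle : forall n x, reach_within tau ell T (S2_1 ell) n x <= bisim_dist tau ell x.
  elim=> [|n IH] x.
    case: (asboolP (S2_1 ell x)) => h1.
      by rewrite rw_S1 // -d_fix Delta_neq.
    by rewrite /= asboolF // d_ge0.
  case: (asboolP (S2_1 ell x)) => h1.
    by rewrite rw_S1 // -d_fix Delta_neq.
  rewrite (rw_step pT) //; case: asboolP => hq; last exact: IH.
  have [cT hc] := hT x (q_eq _ hq).
  exact: le_trans (cost_le cT IH) hc.
have rple : forall x, reach_prob tau ell T (S2_1 ell) x <= bisim_dist tau ell x.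
  move=> x; apply: ge_sup; first by exists (reach_within tau ell T (S2_1 ell) 0 x); exists 0%N.
  by move=> _ [n _ <-]; apply: rwle.
exists T; split => // s t T' hT'; split.
  by apply/eqP; rewrite eq_le rple /= d_le_rp.
exact: le_trans (rple _) (d_le_rp _ hT' _).
Qed.
End Main.


Theorem mainTheorem9 (R : realType) (S : countType) (L : finType)
  (tau : S -> S -> R) (ell : S -> L) :
  is_LMC tau ->
  exists T : S * S -> S * S -> R,
    policy tau ell T /\
    forall (s t : S) (T' : S * S -> S * S -> R),
      policy tau ell T' ->
      bisim_dist tau ell (s, t) = reach_prob tau ell T (S2_1 ell) (s, t) /\
      reach_prob tau ell T (S2_1 ell) (s, t) <= reach_prob tau ell T' (S2_1 ell) (s, t).
Proof.
move=> HL.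
have h : forall s, exists l : seq S, uniq l /\ forall u, tau s u != 0 -> u \in l.
  move=> s; have [_ /finite_seqP [X hX]] := HL s.
  exists (undup X); split; first exact: undup_uniq.
  move=> u hu; have : [set u | tau s u != 0] u by [].
  by rewrite hX /= mem_undup.
have [sp hsp] := choice h.
exact: (@main_sec R S L tau ell HL sp (fun s => (hsp s).1) (fun s => (hsp s).2)).
Qed.
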